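(* Let $X$ be a compact Hausdorff space, $(E,X,\pi)$ a bundle of complete metric spaces bounded by $k$, $U\subseteq X$ open, and $a:U\to E$ a continuous map with $\pi\circ a=\mathrm{id}_U$. Let $x\in U$ and let $\mu$ be an ultrafilter on $X$ converging to $x$. Then $\sigma_\mu(a(x))$ is the class of $(a(y))_{y\in U}$ in $\int_XE_y\,d\mu$.
   Context: Metric ultraproduct: $\int_XE_y\,d\mu=\prod E_y/\{\lim_\mu d(a_y,b_y)=0\}$ with metric $\lim_\mu d(a_y,b_y)$; a class may be given by a family defined on a set belonging to $\mu$ (here $U\in\mu$). Bundle of complete metric spaces bounded by $k$ over $X$: surjection $\pi:E\to X$ with each fibre $E_x$ a complete metric space with distances $\le k$ such that the global distance on $E\times_XE$ (subspace of $E\times E$) is upper semicontinuous, $\pi$ is continuous and open, and for every open $W$ and $f\in W$ there exist an open neighbourhood $V$ of $f$ and $\epsilon>0$ with $V\subseteq V_\epsilon\subseteq W$, where $V_\epsilon=\{g:\exists h\in V,\pi g=\pi h,d(g,h)<\epsilon\}$. $\sigma_\mu:E_x\to\int_XE_y\,d\mu$ is defined as follows: for an open neighbourhood $W$ of $f\in E_x$ let $A_W=\{(b_y)_{y\in X}:\exists U'\in\mu,\exists\epsilon>0,\ \coprod_{y\in U'}B(b_y,\epsilon)\subseteq W\}$; the filter generated by the $A_W$ is Cauchy and $\sigma_\mu(f)$ is its limit. *)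

(* Defs.v *)
From HB Require Import structures.
From mathcomp Require Import all_boot all_order all_algebra.
From mathcomp Require Import all_classical all_reals all_analysis.
From Stdlib Require Import ClassicalEpsilon.

Set Implicit Arguments.
Unset Strict Implicit.
Unset Printing Implicit Defensive.

Import Order.TTheory GRing.Theory Num.Theory.
Import numFieldNormedType.Exports.
Local Open Scope classical_set_scope.
Local Open Scope ring_scope.

Section Bundle.
Variables (R : realType) (X E : topologicalType) (pi : E -> X) (d : E -> E -> R).

(* The global distance d is only meaningful on E x_X E = {(g,h) | pi g = pi h}. *)

Definition fibres_metric_bounded (k : R) : Prop :=
  forall g h l : E, pi g = pi h -> pi h = pi l ->
    [/\ 0 <= d g h, d g h = 0 <-> g = h, d g h = d h g,
        d g l <= d g h + d h l & d g h <= k].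

Definition fibres_complete : Prop :=
  forall (x : X) (u : nat -> E), (forall n, pi (u n) = x) ->
    (forall e : R, 0 < e -> exists N, forall m n, (N <= m)%N -> (N <= n)%N ->
        d (u m) (u n) < e) ->
    exists l : E, pi l = x /\
      (forall e : R, 0 < e -> exists N, forall n, (N <= n)%N -> d (u n) l < e).

Definition dist_usc : Prop :=
  forall g h : E, pi g = pi h -> forall r : R, d g h < r ->
    \forall p \near (g, h), pi p.1 = pi p.2 -> d p.1 p.2 < r.

Definition Veps (V : set E) (eps : R) : set E :=
  [set g | exists h, V h /\ pi g = pi h /\ d g h < eps].

Definition Veps_condition : Prop :=
  forall (W : set E) (f : E), open W -> W f ->
    exists V : set E, exists eps : R,
      [/\ open V, V f, 0 < eps, V `<=` Veps V eps & Veps V eps `<=` W].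

Definition is_bundle (k : R) : Prop :=
  [/\ (forall x : X, exists g : E, pi g = x),
      fibres_metric_bounded k,
      fibres_complete & dist_usc] /\
  [/\ continuous pi,
      (forall A : set E, open A -> open (pi @` A))
    & Veps_condition].

Variable mu : set_system X.

(* a representative of a class of the ultraproduct: a family b_y in E_y
   defined on a set belonging to mu (values elsewhere are irrelevant) *)
Definition ufam (b : X -> E) : Prop := mu [set y | pi (b y) = y].

Definition udist (b c : X -> E) : R := lim ((fun y => d (b y) (c y)) @ mu).

Definition coprod_ball (b : X -> E) (U' : set X) (eps : R) : set E :=
  [set g | U' (pi g) /\ d g (b (pi g)) < eps].

Definition A_W (W : set E) : set (X -> E) :=
  [set b | ufam b /\ exists U' : set X, exists eps : R,
      [/\ mu U', (forall y, U' y -> pi (b y) = y), 0 < eps &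
          coprod_ball b U' eps `<=` W]].

(* the filter (on the ultraproduct) generated by the A_W, W open nbhd of f;
   the A_W form a filter base since A_(W1 `&` W2) `<=` A_W1 `&` A_W2 *)
Definition sigma_filter (f : E) : set (set (X -> E)) :=
  [set P | exists W : set E, [/\ open W, W f & A_W W `<=` P]].

(* c is a limit of that filter in the ultraproduct (pseudo)metric *)
Definition sigma_limit (f : E) (c : X -> E) : Prop :=
  ufam c /\ forall e : R, 0 < e ->
    sigma_filter f [set b | ufam b /\ udist b c < e].

Definition sigma_mu (f : E) : X -> E :=
  epsilon (inhabits (fun _ : X => f)) (sigma_limit f).

End Bundle.

(* Main.v *)
Require Import Defs.
From HB Require Import structures.
From mathcomp Require Import all_boot all_order all_algebra.
From mathcomp Require Import all_classical all_reals all_analysis.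
From Stdlib Require Import ClassicalEpsilon.
Import Order.TTheory GRing.Theory Num.Theory.
Import numFieldNormedType.Exports.
Local Open Scope classical_set_scope.
Local Open Scope ring_scope.

Lemma ultra_fmap (T U : Type) (F : set_system T) (f : T -> U) :
  UltraFilter F -> UltraFilter (f @ F).
Proof.
move=> FU; split; first exact: fmap_proper_filter.
move=> G PG sFG; apply/seteqP; split; last exact: sFG.
move=> P GP; case: (in_ultra_setVsetC (f @^-1` P) FU) => // nP.
have GnP : G (~` P) by apply: sFG.
have : G (P `&` ~` P) by apply: filterI.
by rewrite setICr => /filter_ex [].
Qed.

Lemma ultra_lim_bound (R : realType) (T : Type) (F : set_system T) (f : T -> R) (r : R) :
  UltraFilter F -> (\forall t \near F, 0 <= f t <= r) ->
  f @ F --> lim (f @ F) /\ 0 <= lim (f @ F) <= r.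
Proof.
move=> FU Hf.
have UF := @ultra_fmap _ _ _ f FU.
have := (@segment_compact R 0 r).
rewrite compact_ultra => /(_ _ UF).
case.
  by apply: filterS Hf => t /= Ht; rewrite in_itv /=.
move=> p [/= Hp Hc].
have Hl : lim (f @ F) = p by apply: cvg_lim.
by rewrite Hl; split => //; move: Hp; rewrite in_itv.
Qed.

Theorem mainTheorem7 (R : realType) (X E : topologicalType) (pi : E -> X)
    (d : E -> E -> R) (k : R) :
  compact [set: X] -> hausdorff_space X ->
  is_bundle pi d k ->
  forall (U : set X) (a : X -> E),
    open U ->
    (forall y, U y -> {for y, continuous a}) ->
    (forall y, U y -> pi (a y) = y) ->
  forall (x : X) (mu : set_system X),
    U x -> UltraFilter mu -> mu --> x ->
    ufam pi mu (sigma_mu pi d mu (a x)) /\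
    udist d mu (sigma_mu pi d mu (a x)) a = 0.
Proof.
move=> _ _ [[surj metr compl usc] [cpi openpi Veps]] U a oU ca piA x mu Ux muU mux.
have FU : ProperFilter mu by exact: ultra_proper.
have mU : mu U by apply: mux; apply: open_nbhs_nbhs.
have ufa : ufam pi mu a by apply: filterS mU => y /piA.
have aW : forall W, open W -> W (a x) -> A_W pi d mu W a.
  move=> W oW Wax; have [V [eps [oV Vax eps0 VV VW]]] := Veps W (a x) oW Wax.
  split => //; exists (U `&` a @^-1` V), eps; split => //.
  - apply: filterI => //; apply: mux; apply: (ca x Ux).
    exact: open_nbhs_nbhs.
  - by move=> y [/piA].
  - move=> g [[Ug Vg] dg]; apply: VW; exists (a (pi g)); split => //.
    by rewrite piA.
have sla : sigma_limit pi d mu (a x) a.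
  split => // e e0.
  exists [set g | U (pi g) /\ d g (a (pi g)) < e / 2]; split.
  - rewrite openE => g [Ug dg].
    have hpi : pi g = pi (a (pi g)) by rewrite piA.
    have := usc g (a (pi g)) hpi (e / 2) dg.
    move=> Hn.
    have cphi : (fun g' => (g', a (pi g'))) @ g --> (g, a (pi g)).
      apply: cvg_pair; first exact: cvg_id.
      exact: (@cvg_comp _ _ _ pi a (nbhs g) (nbhs (pi g)) (nbhs (a (pi g))) (cpi g) (ca _ Ug)).
    have N1 : \forall g' \near g, pi g' = pi (a (pi g')) -> d g' (a (pi g')) < e / 2.
      exact: (cphi _ Hn).
    have N2 : nbhs g (pi @^-1` U).
      by apply: (cpi g); apply: open_nbhs_nbhs.
    have N3 : nbhs g ([set g' | pi g' = pi (a (pi g')) -> d g' (a (pi g')) < e / 2] `&` pi @^-1` U).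
      by apply: filterI.
    rewrite /interior /=.
    apply: (filterS _ N3) => g' /= [Hd Ug']; split => //.
    by apply: Hd => /=; rewrite piA.
  - split; first by rewrite piA.
    rewrite piA //.
    have [_ [_ H0] _ _ _] := metr (a x) (a x) (a x) erefl erefl.
    by rewrite H0 // divr_gt0.
  - move=> b [ufb [U' [eps [mU' hb eps0 cb]]]]; split => //.
    have Hn : \forall y \near mu, 0 <= d (b y) (a y) <= e / 2.
      apply: filterS (filterI mU mU') => y [Uy U'y].
      have hby := hb y U'y.
      have hba : pi (b y) = pi (a y) by rewrite hby piA.
      have [H0 [_ H00] _ _ _] := metr (b y) (b y) (a y) erefl hba.
      have : coprod_ball pi d b U' eps (b y).
        split; first by rewrite hby.
        by rewrite hby H00.
      move=> /cb [_]; rewrite hby => /ltW ->.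
      have [H1 _ _ _ _] := metr (b y) (a y) (a y) hba erefl.
      by rewrite H1.
    have [_ /andP [_ Hl]] := @ultra_lim_bound _ _ _ _ _ muU Hn.
    rewrite /udist; apply: (le_lt_trans Hl).
    by rewrite ltr_pdivrMr // ltr_pMr // ltr1n.
set c := sigma_mu pi d mu (a x).
have Hc : sigma_limit pi d mu (a x) c.
  by rewrite /c /sigma_mu; apply: epsilon_spec; exists a.
split; first exact: Hc.1.
have Hn : \forall y \near mu, 0 <= d (a y) (c y) <= k.
  apply: filterS (filterI mU Hc.1) => y [Uy /= hc].
  have hac : pi (a y) = pi (c y) by rewrite hc piA.
  have [H0 _ _ _ Hk] := metr (a y) (c y) (c y) hac erefl.
  by rewrite H0 Hk.
have [cv /andP [L0 _]] := @ultra_lim_bound _ _ _ _ _ muU Hn.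
have Heq : udist d mu c a = lim ((fun y => d (a y) (c y)) @ mu).
  have E1 : \forall y \near mu, d (a y) (c y) = d (c y) (a y).
    apply: filterS (filterI mU Hc.1) => y [Uy /= hc].
    have hac : pi (a y) = pi (c y) by rewrite hc piA.
    have [_ _ -> _ _] := metr (a y) (c y) (c y) hac erefl.
    by [].
  rewrite /udist; apply: cvg_lim => //.
  exact: cvg_trans (near_eq_cvg E1) cv.
have Hlt : forall e : R, 0 < e -> lim ((fun y => d (a y) (c y)) @ mu) < e.
  move=> e e0; have [W [oW Wax sub]] := Hc.2 e e0.
  have [_ ] := sub a (aW W oW Wax).
  by rewrite /udist.
rewrite Heq; apply/eqP; rewrite eq_le L0 andbT.
rewrite leNgt; apply/negP => Lp.
by have := Hlt _ Lp; rewrite ltxx.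
Qed.
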